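(* Let $A, B\in\mathbb{R}^{m\times n}$ with $m<n$, $b\in\mathbb{R}^m$, and $s\in\{-1,1\}^n$, and let $B = M_B - N_B$ with $M_B,N_B\in\mathbb{R}^{m\times n}$ and $\operatorname{rank}(M_B) = m$. (a) Let $1\le p\le\infty$. If $M_B^\dagger b \le 0$, $M_B^\dagger [N_B+A\operatorname{diag}(s)] \ge 0$ and $\|M_B^\dagger [N_B+A\operatorname{diag}(s)]\|_p < 1$, then there exists a nonnegative solution $y_*\in\mathbb{R}^n$ of the linear system $[A\operatorname{diag}(s)-B]y=b$ such that $x_* = \operatorname{diag}(s)y_*$ is a solution of $Ax-B|x|=b$. (b) If $M_B^\dagger b < 0$ and $\|M_B^\dagger [N_B+A\operatorname{diag}(s)]\|_\infty < \gamma/2$, where $\gamma = \dfrac{\min_i|(M_B^\dagger b)_i|}{\max_i|(M_B^\dagger b)_i|}$, then $Ax-B|x|=b$ has infinitely many solutions with the sign pattern $s$.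
   Context: $M^\dagger$ is the Moore–Penrose inverse; $|x|$ is the entrywise absolute value; $\operatorname{diag}(s)$ is the diagonal matrix with diagonal $s$. Vector/matrix inequalities ($\le,<,\ge$) are entrywise. $\|\cdot\|_p$ on matrices is the operator norm induced by the vector $p$-norm. A vector $x$ has sign pattern $s$ if $\operatorname{sign}(x_{(i)})=s_{(i)}$ for all $i$. *)

(* Defs.v *)
From HB Require Import structures.
From mathcomp Require Import all_boot all_order all_algebra.
From mathcomp Require Import all_classical all_reals all_analysis.
Set Implicit Arguments. Unset Strict Implicit. Unset Printing Implicit Defensive.
Import Order.TTheory GRing.Theory Num.Theory.
Local Open Scope classical_set_scope.
Local Open Scope ring_scope.

(* Moore--Penrose inverse, via the four Penrose equations (real matrices,
   so the conjugate transpose is the transpose). *)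
Definition is_MP_inverse (R : realType) (m n : nat)
    (M : 'M[R]_(m, n)) (X : 'M[R]_(n, m)) : Prop :=
  [/\ M *m X *m M = M, X *m M *m X = X,
      (M *m X)^T = M *m X & (X *m M)^T = X *m M].

Definition mx_le (R : realType) (m n : nat) (P Q : 'M[R]_(m, n)) : Prop :=
  forall i j, P i j <= Q i j.
Definition mx_lt (R : realType) (m n : nat) (P Q : 'M[R]_(m, n)) : Prop :=
  forall i j, P i j < Q i j.

Definition absmx (R : realType) (m n : nat) (P : 'M[R]_(m, n)) : 'M[R]_(m, n) :=
  map_mx (fun a => `|a|) P.

Definition diagc (R : realType) (n : nat) (s : 'cV[R]_n) : 'M[R]_n :=
  diag_mx s^T.

Definition vnorm (R : realType) (p : \bar R) (n : nat) (x : 'cV[R]_n) : R :=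
  match p with
  | EFin r => powR (\sum_i powR `|x i 0| r) r^-1
  | +oo%E => \big[Num.max/0]_i `|x i 0|
  | -oo%E => 0
  end.

Definition opnorm (R : realType) (p : \bar R) (m n : nat) (M : 'M[R]_(m, n)) : R :=
  sup [set vnorm p (M *m x) / vnorm p x | x in [set x : 'cV[R]_n | x != 0]].

Definition vabsmax (R : realType) (n : nat) (v : 'cV[R]_n) : R :=
  \big[Num.max/0]_i `|v i 0|.
Definition vabsmin (R : realType) (n : nat) (v : 'cV[R]_n) : R :=
  \big[Num.min/vabsmax v]_i `|v i 0|.

Definition has_sign_pattern (R : realType) (n : nat) (x s : 'cV[R]_n) : Prop :=
  forall i, Num.sg (x i 0) = s i 0.

(* Main.v *)
Require Import Defs.
From HB Require Import structures.
From mathcomp Require Import all_boot all_order all_algebra.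
From mathcomp Require Import all_classical all_reals all_analysis.
From mathcomp Require Import lra.
Import Order.TTheory GRing.Theory Num.Theory.
Local Open Scope classical_set_scope.
Local Open Scope ring_scope.

Set Implicit Arguments. Unset Strict Implicit.

Section Aux.
Variable R : realType.

Lemma bigmax_ge_seq (I : eqType) (r : seq I) (F : I -> R) x0 i :
  i \in r -> F i <= \big[Num.max/x0]_(j <- r) F j.
Proof.
elim: r => // a r IH; rewrite inE big_cons => /orP[/eqP->|/IH h].
  by rewrite le_max lexx.
by rewrite le_max h orbT.
Qed.

Lemma bigmin_le_seq (I : eqType) (r : seq I) (F : I -> R) x0 i :
  i \in r -> \big[Num.min/x0]_(j <- r) F j <= F i.
Proof.
elim: r => // a r IH; rewrite inE big_cons => /orP[/eqP->|/IH h].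
  by rewrite ge_min lexx.
by rewrite ge_min h orbT.
Qed.

Lemma bigmax_ge (n : nat) (F : 'I_n -> R) x0 i : F i <= \big[Num.max/x0]_j F j.
Proof. exact: bigmax_ge_seq (mem_index_enum i). Qed.

Lemma bigmin_le (n : nat) (F : 'I_n -> R) x0 i : \big[Num.min/x0]_j F j <= F i.
Proof. exact: bigmin_le_seq (mem_index_enum i). Qed.

Lemma bigmax_le (n : nat) (F : 'I_n -> R) x0 c :
  x0 <= c -> (forall i, F i <= c) -> \big[Num.max/x0]_j F j <= c.
Proof.
move=> h0 hF; apply: (big_ind (fun v => v <= c)) => //.
by move=> a b ha hb; rewrite ge_max ha hb.
Qed.

Lemma term_le_sum (n : nat) (F : 'I_n -> R) i :
  (forall j, 0 <= F j) -> F i <= \sum_j F j.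
Proof.
move=> h; rewrite (bigD1 i) //= lerDl; exact: sumr_ge0.
Qed.

Lemma powR_le (a b r : R) : 0 <= r -> 0 <= a -> a <= b -> powR a r <= powR b r.
Proof.
move=> r0 a0 ab; apply: ge0_ler_powR => //; rewrite nnegrE //; exact: le_trans ab.
Qed.

Lemma powR_K (a r : R) : 0 < r -> 0 <= a -> a = powR (powR a r) r^-1.
Proof. by move=> r0 a0; rewrite -powRrM mulfV ?gt_eqF // powRr1. Qed.

Lemma vnorm_entry (p : \bar R) n (x : 'cV[R]_n) i :
  (1 <= p)%E -> `|x i 0| <= vnorm p x.
Proof.
case: p => [r| |] //=; last by move=> _; exact: bigmax_ge.
rewrite lee_fin => r1.
have r0 : 0 < r by apply: lt_le_trans r1.
rewrite (@powR_K `|x i 0| r r0 (normr_ge0 _)).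
apply: powR_le; [by rewrite invr_ge0 ltW | exact: powR_ge0 |].
by apply: (@term_le_sum _ (fun j => powR `|x j 0| r)) => j; exact: powR_ge0.
Qed.

Lemma vnorm_ge0 (p : \bar R) n (x : 'cV[R]_n) : (1 <= p)%E -> 0 <= vnorm p x.
Proof.
case: p => [r| |] //= _; first exact: powR_ge0.
by apply: (big_ind (fun v => 0 <= v)) => // a b ha hb; rewrite le_max ha.
Qed.

Lemma vnorm_mono (p : \bar R) n (u v : 'cV[R]_n) : (1 <= p)%E ->
  (forall i, `|u i 0| <= `|v i 0|) -> vnorm p u <= vnorm p v.
Proof.
move=> hp huv; move: (hp) (vnorm_ge0 v hp) (fun i => vnorm_entry v i hp).
case: p {hp} => [r| |] //=; last first.
  by move=> _ h0 hi; apply: bigmax_le => // i; apply: le_trans (huv i) (hi i).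
rewrite lee_fin => r1 _ _; have r0 : 0 < r by apply: lt_le_trans r1.
apply: powR_le; [by rewrite invr_ge0 ltW | by apply: sumr_ge0 => j _; exact: powR_ge0 |].
apply: ler_sum => j _; apply: powR_le => //; exact: ltW.
Qed.

Lemma vnorm_le_sum (p : \bar R) n (x : 'cV[R]_n) : (1 <= p)%E ->
  vnorm p x <= n.+1%:R * \sum_i `|x i 0|.
Proof.
have S0 : 0 <= \sum_i `|x i 0| by apply: sumr_ge0.
have Si : forall i, `|x i 0| <= \sum_i `|x i 0|.
  by move=> i; apply: term_le_sum.
have le1 : \sum_i `|x i 0| <= n.+1%:R * \sum_i `|x i 0|.
  by rewrite ler_peMl // ler1n.
case: p => [r| |] //=; last first.
  by move=> _; apply: bigmax_le; rewrite ?mulr_ge0 // => i; apply: le_trans (Si i) le1.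
rewrite lee_fin => r1; have r0 : 0 < r by apply: lt_le_trans r1.
set S := \sum_i `|x i 0|.
rewrite (@powR_K (n.+1%:R * S) r r0); last by rewrite mulr_ge0.
apply: powR_le; [by rewrite invr_ge0 ltW | by apply: sumr_ge0 => j _; exact: powR_ge0 |].
apply: (@le_trans _ _ (\sum_(i < n) powR S r)).
  apply: ler_sum => j _; apply: powR_le => //; exact: ltW.
rewrite sumr_const card_ord -[_ *+ n]mulr_natl powRM //.
apply: ler_wpM2r; first exact: powR_ge0.
apply: (@le_trans _ _ n.+1%:R); first by rewrite ler_nat.
rewrite -{1}(@powRr1 _ n.+1%:R) //; apply: ler_powR => //; by rewrite ler1n.
Qed.

End Aux.

Section Aux2.
Variable R : realType.

Lemma cV_neq0 n (x : 'cV[R]_n) : x != 0 -> exists i, x i 0 != 0.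
Proof.
move=> hx; case: (boolP [exists i, x i 0 != 0]) => [/existsP[i hi]|/existsPn h].
  by exists i.
case/negP: hx; apply/eqP/matrixP => i j; rewrite (ord1 j) mxE; exact/eqP/negbNE/h.
Qed.

Lemma vnorm_gt0 (p : \bar R) n (x : 'cV[R]_n) : (1 <= p)%E -> x != 0 -> 0 < vnorm p x.
Proof.
move=> hp /cV_neq0 [i hi]; apply: lt_le_trans (vnorm_entry x i hp).
by rewrite normr_gt0.
Qed.

Lemma vnorm0 (p : \bar R) n : (1 <= p)%E -> vnorm p (0 : 'cV[R]_n) = 0.
Proof.
move=> hp; apply/le_anti; rewrite vnorm_ge0 // andbT.
apply: le_trans (vnorm_le_sum _ hp) _.
by rewrite big1 ?mulr0 // => i _; rewrite mxE normr0.
Qed.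

Lemma Cx_bound (p : \bar R) n (C : 'M[R]_n) (x : 'cV[R]_n) : (1 <= p)%E ->
  vnorm p (C *m x) <= (n.+1%:R * \sum_i \sum_j `|C i j|) * vnorm p x.
Proof.
move=> hp; apply: le_trans (vnorm_le_sum _ hp) _; rewrite -mulrA.
apply: ler_wpM2l => //; rewrite mulr_suml; apply: ler_sum => i _.
rewrite mxE mulr_suml; apply: le_trans (ler_norm_sum _ _ _) _.
apply: ler_sum => j _; rewrite normrM; apply: ler_wpM2l => //.
exact: vnorm_entry.
Qed.

Lemma ratio_le (p : \bar R) n (C : 'M[R]_n) (x : 'cV[R]_n) : (1 <= p)%E ->
  x != 0 -> vnorm p (C *m x) / vnorm p x <= opnorm p C.
Proof.
move=> hp hx; apply: ub_le_sup; last by exists x.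
exists (n.+1%:R * \sum_i \sum_j `|C i j|) => _ [y /= hy <-].
rewrite ler_pdivrMr ?vnorm_gt0 //; exact: Cx_bound.
Qed.

Lemma opnorm_ub (p : \bar R) n (C : 'M[R]_n) (x : 'cV[R]_n) : (1 <= p)%E ->
  vnorm p (C *m x) <= opnorm p C * vnorm p x.
Proof.
move=> hp; case: (eqVneq x 0) => [->|hx].
  by rewrite mulmx0 !vnorm0 // mulr0.
by rewrite -ler_pdivrMr ?vnorm_gt0 //; exact: ratio_le.
Qed.

Lemma opnorm_ge0 (p : \bar R) n (C : 'M[R]_n) : (1 <= p)%E -> (0 < n)%N ->
  0 <= opnorm p C.
Proof.
move=> hp hn; have hx : (const_mx 1 : 'cV[R]_n) != 0.
  apply/negP => /eqP/matrixP/(_ (Ordinal hn) 0); rewrite !mxE => /eqP.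
  by rewrite oner_eq0.
apply: le_trans (ratio_le C hp hx); apply: divr_ge0; exact: vnorm_ge0.
Qed.

Lemma MP_right m n (M : 'M[R]_(m, n)) (X : 'M[R]_(n, m)) :
  \rank M = m -> is_MP_inverse M X -> M *m X = 1%:M.
Proof.
move=> hr [h1 _ _ _]; have hf : row_free M by rewrite /row_free hr.
by apply: (row_free_inj hf); rewrite /= mul1mx.
Qed.

Lemma unit_sub n (C : 'M[R]_n) : (forall x : 'cV[R]_n, C *m x = x -> x = 0) ->
  (1%:M - C) \in unitmx.
Proof.
move=> h; rewrite unitmxE unitfE -det_tr; apply/negP => /det0P [v hv0 hv].
have : C *m v^T = v^T.
  have := congr1 trmx hv; rewrite trmx_mul trmxK trmx0 mulmxBl mul1mx => /eqP.
  by rewrite subr_eq0 => /eqP E; rewrite -E.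
move/h => /(congr1 trmx); rewrite trmxK trmx0 => E.
by rewrite E eqxx in hv0.
Qed.

End Aux2.

Section Aux3.
Variable R : realType.

Lemma zm_id (V : zmodType) (a b c : V) : a - ((c + a - b) - c) = b.
Proof. by rewrite addrAC [c + a]addrC addrK opprB addrC subrK. Qed.

Lemma diagc_mul n (s y : 'cV[R]_n) i : (diagc s *m y) i 0 = s i 0 * y i 0.
Proof. by rewrite /diagc mul_diag_mx !mxE. Qed.

Lemma sol_step m n (A B MB NB : 'M[R]_(m, n)) (b : 'cV[R]_m) (s : 'cV[R]_n)
    (MBdag : 'M[R]_(n, m)) (w y : 'cV[R]_n) :
  (forall i, s i 0 = 1 \/ s i 0 = -1) -> B = MB - NB -> MB *m MBdag = 1%:M ->
  MB *m w = 0 ->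
  y = MBdag *m (NB + A *m diagc s) *m y - MBdag *m b + w ->
  (forall i, 0 <= y i 0) ->
  (A *m diagc s - B) *m y = b /\
  A *m (diagc s *m y) - B *m absmx (diagc s *m y) = b.
Proof.
move=> hs hB hP hw Ey hy.
have E1 : MB *m y = (NB + A *m diagc s) *m y - b.
  by rewrite {1}Ey mulmxDr mulmxBr hw addr0 !mulmxA hP !mul1mx.
have E2 : (A *m diagc s - B) *m y = b.
  by rewrite hB mulmxBl mulmxBl E1 mulmxDl zm_id.
have Habs : absmx (diagc s *m y) = y.
  apply/matrixP => i j; rewrite (ord1 j) /absmx mxE diagc_mul normrM (ger0_norm (hy i)).
  by case: (hs i) => ->; rewrite ?normrN normr1 mul1r.
by split => //; rewrite Habs mulmxA -mulmxBl.
Qed.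

Lemma lt1_contra (a a' q : R) : a <= a' -> a' <= q * a -> 0 < a -> q < 1 -> False.
Proof. move=> *; nra. Qed.

Lemma L1 (q Mx mn : R) : 0 < Mx -> mn <= Mx -> q * Mx < mn / 2 -> q < 1/2.
Proof. move=> *; nra. Qed.

Lemma L1b (q : R) : q < 1/2 -> q < 1.
Proof. move=> *; lra. Qed.

Lemma Lg (q Mx mn : R) : 0 < Mx -> 0 <= q -> q < 1/2 -> q * Mx < mn / 2 ->
  0 < (1 - q) * mn - q * Mx.
Proof. move=> M0 q0 q2 h; have mn0 : 0 <= mn by nra. nra. Qed.

Lemma L2 (g V : R) k : 0 < g -> 0 < V ->
  0 < g / (V + 1) / (k.+2)%:R /\ g / (V + 1) / (k.+2)%:R * V < g.
Proof.
move=> g0 V0; have h1 : 1 < (k.+2)%:R :> R by rewrite ltr1n.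
have e0 : 0 < g / (V + 1) by apply: divr_gt0 => //; lra.
have t0 : 0 < g / (V + 1) / (k.+2)%:R by apply: divr_gt0 => //; lra.
split => //.
have te : g / (V + 1) / (k.+2)%:R < g / (V + 1).
  rewrite ltr_pdivrMr; last lra.
  move: e0 h1; set e := g / (V + 1); move=> *; nra.
have ge : g / (V + 1) * (V + 1) = g by rewrite divfK //; apply/lt0r_neq0; lra.
move: te ge t0 e0; set e := g / (V + 1); set t := e / _; move=> *; nra.
Qed.

Lemma L3 (q Mx mn Y T : R) : 0 <= q -> q < 1/2 -> 0 <= Y ->
  Y <= q * Y + (Mx + T) -> T < (1 - q) * mn - q * Mx -> 0 < mn - T - q * Y.
Proof.
move=> q0 q2 Y0 hY hT.
have h : q * (Y * (1 - q)) <= q * (Mx + T) by apply: ler_wpM2l => //; lra.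
nra.
Qed.

Lemma L4 (a ci tv mn Y q T : R) : - (q * Y) <= a -> mn <= - ci -> - T <= tv ->
  mn - T - q * Y <= a + (- ci + tv).
Proof. move=> *; lra. Qed.

Lemma L5 (e : R) k j : 0 < e -> e / (k.+2)%:R = e / (j.+2)%:R -> k = j.
Proof.
move=> e0 /(mulfI (lt0r_neq0 e0))/invr_inj/eqP; rewrite eqr_nat => /eqP [] //.
Qed.

Lemma fix0 (p : \bar R) n (C : 'M[R]_n) : (1 <= p)%E -> opnorm p C < 1 ->
  forall x : 'cV[R]_n, C *m x = x -> x = 0.
Proof.
move=> hp hq x hx; case: (eqVneq x 0) => // hx0; exfalso.
have h1 := opnorm_ub C x hp; rewrite hx in h1.
have h2 := vnorm_gt0 hp hx0.
move: h1 h2 hq; set a := vnorm p x; set q := opnorm p C; clear hp hx => *; nra.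
Qed.

Lemma null_vec m n (M : 'M[R]_(m, n)) : (m < n)%N ->
  exists v : 'cV[R]_n, v != 0 /\ M *m v = 0.
Proof.
move=> hmn; set K := kermx M^T.
have hK : \rank K = (n - \rank M)%N by rewrite mxrank_ker mxrank_tr.
have hr : (\rank M <= m)%N := rank_leq_row M.
case: (boolP [exists i, row i K != 0]) => [/existsP[i hi]|/existsPn h].
  exists (row i K)^T; split.
    by apply/negP => /eqP/(congr1 trmx); rewrite trmxK trmx0 => E; rewrite E eqxx in hi.
  have := congr1 trmx (mulmx_ker M^T); rewrite trmx0 => _.
  have E : row i K *m M^T = 0 by rewrite -row_mul mulmx_ker row0.
  by have := congr1 trmx E; rewrite trmx_mul trmxK trmx0.
have K0 : K = 0 by apply/row_matrixP => i; rewrite row0; exact/eqP/negbNE/h.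
move: hK; rewrite K0 mxrank0 => /esym/eqP; rewrite subn_eq0 => hle.
by move: (leq_trans hle hr); rewrite leqNgt hmn.
Qed.

End Aux3.

Unset Implicit Arguments. Set Strict Implicit.

Theorem theorem3p5 (R : realType) (m n : nat)
    (A B MB NB : 'M[R]_(m, n)) (b : 'cV[R]_m) (s : 'cV[R]_n)
    (MBdag : 'M[R]_(n, m)) :
  (m < n)%N ->
  (forall i, s i 0 = 1 \/ s i 0 = -1) ->
  B = MB - NB ->
  \rank MB = m ->
  is_MP_inverse MB MBdag ->
  (forall p : \bar R, (1 <= p)%E ->
     mx_le (MBdag *m b) 0 ->
     mx_le 0 (MBdag *m (NB + A *m diagc s)) ->
     opnorm p (MBdag *m (NB + A *m diagc s)) < 1 ->
     exists y : 'cV[R]_n,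
       [/\ mx_le 0 y, (A *m diagc s - B) *m y = b &
           A *m (diagc s *m y) - B *m absmx (diagc s *m y) = b])
  /\
  (mx_lt (MBdag *m b) 0 ->
   opnorm +oo%E (MBdag *m (NB + A *m diagc s))
     < (vabsmin (MBdag *m b) / vabsmax (MBdag *m b)) / 2 ->
   infinite_set [set x : 'cV[R]_n |
      A *m x - B *m absmx x = b /\ has_sign_pattern x s]).
Proof.
move=> hmn hs hB hr hMP.
have hP := MP_right hr hMP.
have hn : (0 < n)%N by apply: leq_ltn_trans hmn.
set C := MBdag *m (NB + A *m diagc s).
set c := MBdag *m b.
split.
- move=> p hp hc hC hq.
  have hU := unit_sub (fix0 hp hq).
  set y := invmx (1%:M - C) *m (- c).
  have Ey : y = C *m y - c + 0.
    have : (1%:M - C) *m y = - c by rewrite mulmxA mulmxV // mul1mx.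
    rewrite mulmxBl mul1mx => /eqP; rewrite subr_eq => /eqP {1}->.
    by rewrite addr0 addrC.
  set z : 'cV[R]_n := \col_i Num.max (- y i 0) 0.
  have hz : forall i, `|z i 0| <= `|(C *m z) i 0|.
    move=> i.
    have Cz0 : 0 <= (C *m z) i 0.
      rewrite mxE; apply: sumr_ge0 => j _; apply: mulr_ge0.
        by move: (hC i j); rewrite mxE.
      by rewrite mxE le_max lexx orbT.
    rewrite (ger0_norm Cz0) ger0_norm; last by rewrite mxE le_max lexx orbT.
    rewrite mxE ge_max Cz0 andbT.
    have hci : c i 0 <= 0 by move: (hc i 0); rewrite [X in _ <= X -> _]mxE.
    have := congr1 (fun M : 'cV[R]_n => M i 0) Ey; rewrite /= addr0 => ->.
    rewrite !mxE opprD opprK.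
    apply: le_trans (_ : - \sum_j C i j * y j 0 <= _); first by rewrite gerDl; move: hci; rewrite /c mxE.
    rewrite -sumrN; apply: ler_sum => j _; rewrite -mulrN; apply: ler_wpM2l.
      by move: (hC i j); rewrite mxE.
    by rewrite /z [X in _ <= X]mxE le_max lexx.
  have z0 : z = 0.
    case: (eqVneq z 0) => // hz0; exfalso.
    have h1 := vnorm_mono hp hz.
    have h2 := opnorm_ub C z hp.
    have h3 := vnorm_gt0 hp hz0.
    exact: lt1_contra h1 h2 h3 hq.
  have ynn : forall i, 0 <= y i 0.
    move=> i; have := congr1 (fun M : 'cV[R]_n => M i 0) z0; rewrite /= /z [X in X = _]mxE [X in _ = X]mxE => h.
    have : - y i 0 <= Num.max (- y i 0) 0 by rewrite le_max lexx.
    by rewrite h oppr_le0.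
  have [E2 E3] := sol_step hs hB hP (mulmx0 _ _) Ey ynn.
  exists y; split => //.
  by move=> i j; rewrite (ord1 j) mxE.
- move=> hc hq.
  have hp : (1 <= +oo :> \bar R)%E by rewrite leey.
  set q := opnorm +oo C.
  have q0 : 0 <= q := opnorm_ge0 C hp hn.
  set Mx := vabsmax c; set mn := vabsmin c.
  have hci : forall i, c i 0 < 0.
    by move=> i; move: (hc i 0); rewrite [X in _ < X -> _]mxE.
  have Mxi : forall i, `|c i 0| <= Mx by move=> i; exact: bigmax_ge.
  have mni : forall i, mn <= `|c i 0| by move=> i; exact: bigmin_le.
  pose i0 := Ordinal hn.
  have Mx0 : 0 < Mx.
    by apply: lt_le_trans (Mxi i0); rewrite normr_gt0 (lt_eqF (hci i0)).
  have mnMx : mn <= Mx := le_trans (mni i0) (Mxi i0).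
  have hq1 : q * Mx < mn / 2 by move: hq; rewrite mulrAC ltr_pdivlMr.
  have hq2 : q < 1/2 := L1 Mx0 mnMx hq1.
  have hU := unit_sub (fix0 hp (L1b hq2)).
  have [v [v0 Mv]] := null_vec MB hmn.
  set V := vnorm +oo v.
  have V0 : 0 < V := vnorm_gt0 hp v0.
  have g0 := Lg Mx0 q0 hq2 hq1.
  set g := (1 - q) * mn - q * Mx in g0.
  pose t := fun k : nat => g / (V + 1) / (k.+2)%:R.
  have ht : forall k, 0 < t k /\ t k * V < g by move=> k; exact: L2.
  pose y := fun k => invmx (1%:M - C) *m (- c + t k *: v).
  have Ey : forall k, y k = C *m y k - c + t k *: v.
    move=> k.
    have : (1%:M - C) *m y k = - c + t k *: v by rewrite mulmxA mulmxV // mul1mx.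
    rewrite mulmxBl mul1mx => /eqP; rewrite subr_eq => /eqP {1}->.
    by rewrite addrC addrA.
  have ypos : forall k i, 0 < y k i 0.
    move=> k i.
    have hCy := opnorm_ub C (y k) hp.
    have Y0 : 0 <= vnorm +oo (y k) := vnorm_ge0 (y k) hp.
    have hYi : forall j, `|(C *m y k) j 0| <= q * vnorm +oo (y k).
      by move=> j; apply: le_trans (vnorm_entry _ j hp) hCy.
    have hvj : forall j, `|v j 0| <= V by move=> j; exact: vnorm_entry.
    have [tk0 tkV] := ht k.
    have hYeq : forall j, y k j 0 = (C *m y k) j 0 + (- c j 0 + t k * v j 0).
      move=> j; have := congr1 (fun M : 'cV[R]_n => M j 0) (Ey k); rewrite /= => {1}->.
      by rewrite !mxE addrA.
    have hY : vnorm +oo (y k) <= q * vnorm +oo (y k) + (Mx + t k * V).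
      apply: bigmax_le.
        by apply: addr_ge0; [apply: mulr_ge0 | apply: addr_ge0; [exact: ltW | apply: mulr_ge0; exact: ltW]].
      move=> j; rewrite hYeq; (try move=> _); apply: le_trans (ler_normD _ _) _; apply: lerD; first exact: hYi.
      apply: le_trans (ler_normD _ _) _; apply: lerD; first by rewrite normrN.
      rewrite normrM (gtr0_norm tk0); apply: ler_wpM2l; [exact: ltW | exact: hvj].
    apply: lt_le_trans (L3 q0 hq2 Y0 hY tkV) _.
    rewrite hYeq; apply: L4.
    - by move: (hYi i); rewrite ler_norml => /andP[].
    - by rewrite -(ltr0_norm (hci i)).
    - have : `|t k * v i 0| <= t k * V.
        by rewrite normrM (gtr0_norm tk0); apply: ler_wpM2l; [exact: ltW | exact: hvj].
      by rewrite ler_norml => /andP[].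
  have Mw : forall k, MB *m (t k *: v) = 0 by move=> k; rewrite -scalemxAr Mv scaler0.
  pose f := fun k => diagc s *m y k.
  have fS : forall k, A *m f k - B *m absmx (f k) = b /\ has_sign_pattern (f k) s.
    move=> k; split.
      by have [_ E3] := sol_step hs hB hP (Mw k) (Ey k) (fun i => ltW (ypos k i)).
    move=> i; rewrite diagc_mul sgrM (gtr0_sg (ypos k i)) mulr1.
    by case: (hs i) => ->; rewrite ?sgrN sgr1.
  have finj : forall k j, f k = f j -> k = j.
  move=> k j hkj.
  have yeq : y k = y j.
    apply/matrixP => i l; rewrite (ord1 l).
    have := congr1 (fun M : 'cV[R]_n => M i 0) hkj; rewrite /= !diagc_mul.
    apply: mulfI; by case: (hs i) => ->; rewrite ?oppr_eq0 oner_eq0.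
  have := congr1 (mulmx (1%:M - C)) yeq; rewrite /y !mulmxA mulmxV // !mul1mx.
  move/addrI/eqP; rewrite -subr_eq0 -scalerBl scalemx_eq0 (negbTE v0) orbF subr_eq0.
  move/eqP; apply: L5; apply: divr_gt0 => //; apply: lt_le_trans V0 _; by rewrite lerDl ler01.
  move=> /(finite_image (fun x => xget 0%N [set k | f k = x])) hfin.
  apply: infinite_nat; apply: sub_finite_set hfin => k _.
  exists (f k); first exact: fS.
  apply: finj; apply: (@xgetPex _ 0%N [set k' | f k' = f k]); by exists k.
Qed.
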